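(* Let $p$ be an odd prime, $M$ the sub-add move matrix, and $t,k$ as in the context. (a) If $\Gamma_{M,\,p}$ has no secondary cycles, then $\Gamma_{M,\,p}$ has exactly $\frac{p^2-1}{k}$ primary cycles. (b) If $\Gamma_{M,\,p}$ has secondary cycles, then all of them have a common length $s$ for some $s\in\{t,2t\}$, and $\Gamma_{M,\,p}$ has exactly $\frac{p-1}{s}$ secondary cycles and $\frac{p^2-p}{k}$ primary cycles.
   Context: The sub-add move matrix is $M=\begin{pmatrix}1&-1\\1&1\end{pmatrix}$. $\Gamma_{M,\,p}$ is the directed graph with vertex set $\mathbb Z_p^2$ and arcs $((a,b),(a-b,a+b))$ (mod $p$; loops allowed). Let $t$ be the multiplicative order of $-4$ in $GF(p)$ and $k=4t$ (the $\mathbb Z_p$-order of $M$). A directed cycle is a cycle in the underlying undirected graph such that in the induced directed subgraph every vertex has in- and out-degree $1$; a loop is a directed $1$-cycle, a pair of opposite arcs a directed $2$-cycle. A primary cycle is a directed cycle of length $k$; a secondary cycle is a directed cycle that is neither primary nor a $1$-cycle. *)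

(* Defs.v *)
From HB Require Import structures.
From mathcomp Require Import all_boot all_order all_algebra.
Set Implicit Arguments. Unset Strict Implicit. Unset Printing Implicit Defensive.
Import GRing.Theory.
Local Open Scope ring_scope.

(* A directed cycle in a digraph (V, e) (loops allowed), as a vertex set C:
   C is nonempty, its elements can be listed without repetition as
   c_0, ..., c_{n-1} with arcs c_i -> c_{i+1 mod n} (so the underlying
   undirected graph contains a cycle on C; n = 1 is a loop, n = 2 a pair of
   opposite arcs), and in the directed subgraph induced on C every vertex has
   in-degree and out-degree exactly 1. Its length is #|C|. *)
Definition dcycleb (V : finType) (e : rel V) (C : {set V}) : bool :=
  [&& (0 < #|C|)%N,
      [exists c : (#|C|).-tuple V, [&& uniq c, [set x in c] == C & cycle e c]]
    & [forall x in C, (#|[set y in C | e x y]| == 1%N)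
                      && (#|[set y in C | e y x]| == 1%N)]].

Definition subadd_arc (p : nat) : rel ('F_p * 'F_p) :=
  fun u v => v == (u.1 - u.2, u.1 + u.2).

Definition is_mult_order (R : ringType) (x : R) (t : nat) : Prop :=
  (0 < t)%N /\ x ^+ t = 1 /\ (forall n : nat, (0 < n)%N -> x ^+ n = 1 -> (t <= n)%N).

Definition primary_cycles (p k : nat) : {set {set 'F_p * 'F_p}} :=
  [set C | dcycleb (@subadd_arc p) C & #|C| == k].

Definition secondary_cycles (p k : nat) : {set {set 'F_p * 'F_p}} :=
  [set C | [&& dcycleb (@subadd_arc p) C, #|C| != k & #|C| != 1%N]].

(* Main.v *)
Require Import Defs.
From mathcomp Require Import all_boot all_order all_algebra.
From mathcomp Require Import ring zify.
Set Implicit Arguments. Unset Strict Implicit. Unset Printing Implicit Defensive.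
Import GRing.Theory.
Local Open Scope ring_scope.

Definition sa (p : nat) (x : 'F_p * 'F_p) : 'F_p * 'F_p := (x.1 - x.2, x.1 + x.2).
Definition sc (p : nat) (u : 'F_p) (x : 'F_p * 'F_p) : 'F_p * 'F_p := (u * x.1, u * x.2).

Lemma sa_sc p u (x : 'F_p * 'F_p) : sa (sc u x) = sc u (sa x).
Proof. by rewrite /sa /sc /=; congr pair; ring. Qed.

Lemma iter_sa_sc p n u (x : 'F_p * 'F_p) : iter n (@sa p) (sc u x) = sc u (iter n (@sa p) x).
Proof. by elim: n => //= n ->; rewrite sa_sc. Qed.

Lemma sc_mul p u v (x : 'F_p * 'F_p) : sc u (sc v x) = sc (u * v) x.
Proof. by rewrite /sc /=; congr pair; ring. Qed.

Lemma sc1 p (x : 'F_p * 'F_p) : sc 1 x = x.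
Proof. by case: x => a b; rewrite /sc /= !mul1r. Qed.

Lemma sa2 p (x : 'F_p * 'F_p) : iter 2 (@sa p) x = (- (2%:R * x.2), 2%:R * x.1).
Proof. by rewrite /= /sa /=; congr pair; ring. Qed.

Lemma sa4 p (x : 'F_p * 'F_p) : iter 4 (@sa p) x = sc (-4) x.
Proof. by rewrite /= /sa /sc /=; congr pair; ring. Qed.

Lemma sa4n p n (x : 'F_p * 'F_p) : iter (4 * n) (@sa p) x = sc ((-4) ^+ n) x.
Proof.
elim: n => [|n IH]; first by rewrite muln0 expr0 sc1.
by rewrite mulnS iterD IH sa4 sc_mul exprS.
Qed.

Lemma two_neq0 p : prime p -> odd p -> (2%:R : 'F_p) != 0.
Proof.
move=> hp ho; rewrite -(dvdn_pcharf (pchar_Fp hp)); apply/negP => H.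
have := @dvdn_leq p 2 isT H; have := prime_gt1 hp.
by case: p hp ho H => [|[|[|]]].
Qed.

Lemma sa_inj p : prime p -> odd p -> injective (@sa p).
Proof.
move=> hp ho [a b] [a' b'] e.
have h1 : a - b = a' - b' := f_equal fst e.
have h2 : a + b = a' + b' := f_equal snd e.
have e1 : 2%:R * a = 2%:R * a'.
  rewrite (_ : 2%:R * a = (a - b) + (a + b)); last ring.
  by rewrite h1 h2; ring.
have e2 : 2%:R * b = 2%:R * b'.
  rewrite (_ : 2%:R * b = (a + b) - (a - b)); last ring.
  by rewrite h1 h2; ring.
by rewrite (mulfI (two_neq0 hp ho) e1) (mulfI (two_neq0 hp ho) e2).
Qed.

Lemma sa_fix p (x : 'F_p * 'F_p) : sa x = x -> x = (0, 0).
Proof.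
case: x => a b e.
have h1 : a - b = a := f_equal fst e.
have h2 : a + b = b := f_equal snd e.
have hb : b = 0.
  by rewrite (_ : b = a - (a - b)); [rewrite h1 subrr | ring].
have ha : a = 0.
  by rewrite (_ : a = (a + b) - b); [rewrite h2 subrr | ring].
by rewrite ha hb.
Qed.

Lemma sc_fix p u (x : 'F_p * 'F_p) : sc u x = x -> x != (0, 0) -> u = 1.
Proof.
case: x => a b e nz.
have h1 : u * a = a := f_equal fst e.
have h2 : u * b = b := f_equal snd e.
have [a0|a0] := eqVneq a 0.
  have [b0|b0] := eqVneq b 0; first by rewrite a0 b0 eqxx in nz.
  have : (u - 1) * b = 0 by rewrite mulrBl mul1r h2 subrr.
  by move/eqP; rewrite mulf_eq0 (negbTE b0) orbF subr_eq0 => /eqP.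
have : (u - 1) * a = 0 by rewrite mulrBl mul1r h1 subrr.
by move/eqP; rewrite mulf_eq0 (negbTE a0) orbF subr_eq0 => /eqP.
Qed.

Lemma even_t_contra p t (x : 'F_p * 'F_p) : is_mult_order (-4 : 'F_p) t -> ~~ odd t ->
  x != (0, 0) -> iter (2 * t) (@sa p) x = x -> False.
Proof.
move=> [t0 [_ tmin]] ev nz.
have [m ht] : exists m, t = (2 * m)%N.
  by exists t./2; rewrite -[t in LHS](odd_double_half t) (negbTE ev) add0n -mul2n.
subst t.
rewrite mulnA (_ : (2 * 2 = 4)%N) // sa4n => /sc_fix /(_ nz) h.
have m0 : (0 < m)%N by move: t0; case: m {tmin h ev}.
by have := tmin _ m0 h; rewrite -{2}(mul1n m) leq_pmul2r.
Qed.

Lemma odd_t_char p t (x : 'F_p * 'F_p) : is_mult_order (-4 : 'F_p) t -> odd t ->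
  let c := ((-4) ^+ t./2 * 2%:R : 'F_p) in
  (iter (2 * t) (@sa p) x == x) = (x.1 == - (c * x.2)).
Proof.
move=> [t0 [t1 _]] od c.
have [m ht] : exists m, t = (2 * m).+1.
  by exists t./2; rewrite -[t in LHS](odd_double_half t) od add1n -mul2n.
have hm : t./2 = m by rewrite ht mul2n -[_.+1]/(true + m.*2)%N half_bit_double.
rewrite /c hm.
set u : 'F_p := (-4) ^+ m.
have hu : (-4) * u ^+ 2 = 1 by rewrite /u -exprM mulnC -exprS -ht.
have -> : (2 * t = 2 + 4 * m)%N.
  by rewrite ht mulnS mulnA.
rewrite iterD sa4n iter_sa_sc sa2 /sc -/u.
case: x => a b /=; apply/eqP/eqP => [e|->].
  have e1 : u * - (2%:R * b) = a := f_equal fst e.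
  by rewrite -e1; ring.
congr pair; first ring.
rewrite (_ : u * (2%:R * - (u * 2%:R * b)) = ((-4) * u ^+ 2) * b); last ring.
by rewrite hu mul1r.
Qed.
Local Close Scope ring_scope.

Definition forb (T : finType) (f : T -> T) (x : T) : {set T} := [set y | fconnect f x y].

Lemma card_orb (T : finType) (f : T -> T) x : #|forb f x| = order f x.
Proof. by apply: eq_card => y; rewrite inE. Qed.

Lemma in_orb (T : finType) (f : T -> T) x : x \in forb f x.
Proof. by rewrite inE connect0. Qed.

Lemma orb_eq (T : finType) (f : T -> T) (finj : injective f) x y :
  y \in forb f x -> forb f y = forb f x.
Proof.
rewrite inE => hxy; apply/setP => z; rewrite !inE; apply/idP/idP => h.
  exact: connect_trans hxy h.
by rewrite (fconnect_sym finj) in hxy; apply: connect_trans hxy h.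
Qed.

Lemma iter_mul_order (T : finType) (f : T -> T) (finj : injective f) x q :
  iter (q * order f x) f x = x.
Proof.
elim: q => // q IH; by rewrite mulSn iterD IH (iter_order finj).
Qed.

Lemma iter_eq_dvd (T : finType) (f : T -> T) (finj : injective f) x n :
  (iter n f x == x) = (order f x %| n).
Proof.
apply/eqP/idP => [h|/dvdnP [q ->]]; last exact: iter_mul_order.
move: h; rewrite (divn_eq n (order f x)) addnC iterD iter_mul_order // => h.
have := findex_iter (ltn_pmod n (order_gt0 f x)).
by rewrite h findex0 => e; rewrite -e add0n dvdn_mull.
Qed.

Lemma dcycleP (T : finType) (f : T -> T) (finj : injective f) (C : {set T}) :
  dcycleb (fun u v => v == f u) C = [exists x, C == forb f x].
Proof.
have ee : (fun u v => v == f u) =2 frel f by move=> u v /=; rewrite eq_sym.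
apply/idP/idP.
  case/and3P => C0 /existsP [c /and3P [uc /eqP cC cyc]] _.
  case/card_gt0P: C0 => x xC; apply/existsP; exists x; apply/eqP/setP => y.
  rewrite -cC in xC *; rewrite inE in xC.
  rewrite (eq_cycle ee) in cyc.
  by rewrite !inE (fconnect_cycle cyc xC).
case/existsP => x /eqP ->; apply/and3P; split.
- by rewrite card_orb order_gt0.
- have sz : size (orbit f x) == #|forb f x| by rewrite size_orbit card_orb.
  apply/existsP; exists (Tuple sz); rewrite /= orbit_uniq /=.
  rewrite (eq_cycle ee) (cycle_orbit finj) andbT.
  by apply/eqP/setP => y; rewrite !inE fconnect_orbit.
apply/forallP => y; apply/implyP => yC; apply/andP; split.
  have -> : [set z in forb f x | z == f y] = [set f y].
    apply/setP => z; rewrite !inE; apply/andP/eqP => [[] _ /eqP //|->].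
    split => //; rewrite inE in yC; apply: connect_trans yC (fconnect1 f y).
  by rewrite cards1.
have -> : [set z in forb f x | y == f z] = [set finv f y].
  apply/setP => z; rewrite !inE; apply/andP/eqP => [[] _ /eqP ->|->].
    by rewrite (finv_f finj).
  split; last by rewrite (f_finv finj).
  rewrite inE in yC; apply: connect_trans yC (fconnect_finv f y).
by rewrite cards1.
Qed.

Lemma count_fam (T : finType) (f : T -> T) (finj : injective f)
  (Q : {set T} -> bool) n :
  (forall x, Q (forb f x) -> #|forb f x| = n) ->
  #|[set x | Q (forb f x)]| =
  (#|[set C | [exists x, C == forb f x] && Q C]| * n)%N.
Proof.
move=> hn; apply: card_uniform_partition.
  by move=> A; rewrite inE => /andP [/existsP [x /eqP ->]] /hn.
apply/and3P; split.
- apply/eqP/setP => y; rewrite inE; apply/bigcupP/idP.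
    case=> B; rewrite inE => /andP [/existsP [x /eqP ->]] qx yx.
    by rewrite (orb_eq finj yx).
  move=> qy; exists (forb f y); last exact: in_orb.
  by rewrite inE qy andbT; apply/existsP; exists y.
- apply/trivIsetP => A B; rewrite !inE => /andP [/existsP [x /eqP ->]] _.
  move=> /andP [/existsP [y /eqP ->]] _ neq.
  rewrite -setI_eq0; apply/negPn/negP => /set0Pn [z]; rewrite inE => /andP [zx zy].
  by move: neq; rewrite -(orb_eq finj zx) -(orb_eq finj zy) eqxx.
apply/negP; rewrite inE => /andP [/existsP [x /eqP h]] _.
by have := in_orb f x; rewrite -h inE.
Qed.
Local Open Scope ring_scope.

Lemma ord_sc_dvd p (hp : prime p) (ho : odd p) u (x : 'F_p * 'F_p) :
  (order (@sa p) (sc u x) %| order (@sa p) x)%N.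
Proof.
by rewrite -(iter_eq_dvd (sa_inj hp ho)) iter_sa_sc (iter_order (sa_inj hp ho)).
Qed.

Lemma ord_sc p (hp : prime p) (ho : odd p) u (x : 'F_p * 'F_p) : u != 0 ->
  order (@sa p) (sc u x) = order (@sa p) x.
Proof.
move=> u0; apply/eqP; rewrite eqn_dvd ord_sc_dvd //=.
rewrite {1}(_ : x = sc u^-1 (sc u x)); first exact: ord_sc_dvd.
by rewrite sc_mul mulVf // sc1.
Qed.

Lemma sa_ord1 p (hp : prime p) (ho : odd p) (x : 'F_p * 'F_p) :
  (order (@sa p) x == 1%N) = (x == (0, 0)).
Proof.
apply/eqP/eqP => [h|->].
  have := iter_order (sa_inj hp ho) x; rewrite h /= => /sa_fix //.
apply/eqP; rewrite -dvdn1 -(iter_eq_dvd (sa_inj hp ho)) /= /sa /=.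
by rewrite subr0 addr0.
Qed.

Lemma t_dvd p t (hp : prime p) (ho : odd p) (ht : is_mult_order (-4 : 'F_p) t)
  (x : 'F_p * 'F_p) : x != (0, 0) -> (t %| order (@sa p) x)%N.
Proof.
move=> nz; case: ht => [t0 [t1 tmin]].
have := iter_mul_order (sa_inj hp ho) x 4; rewrite sa4n => /sc_fix /(_ nz).
set L := order _ x => hL.
rewrite /dvdn; apply/negPn/negP => hr.
have r0 : (0 < L %% t)%N by rewrite lt0n.
have : (-4 : 'F_p) ^+ (L %% t) = 1.
  by move: hL; rewrite {1}(divn_eq L t) exprD mulnC exprM t1 expr1n mul1r.
by move/(tmin _ r0); rewrite leqNgt ltn_pmod.
Qed.

Lemma ord_dvd4 p t (hp : prime p) (ho : odd p) (ht : is_mult_order (-4 : 'F_p) t)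
  (x : 'F_p * 'F_p) : (order (@sa p) x %| 4 * t)%N.
Proof.
case: ht => [t0 [t1 tmin]].
by rewrite -(iter_eq_dvd (sa_inj hp ho)) sa4n t1 sc1.
Qed.

Lemma ord_cases p t (hp : prime p) (ho : odd p) (ht : is_mult_order (-4 : 'F_p) t)
  (x : 'F_p * 'F_p) : x != (0, 0) ->
  [/\ (order (@sa p) x != 4 * t)%N = (iter (2 * t) (@sa p) x == x),
      (order (@sa p) x != 4 * t)%N -> order (@sa p) x = t \/ order (@sa p) x = (2 * t)%N
    & order (@sa p) x != 1%N].
Proof.
move=> nz; have t0 : (0 < t)%N by case: ht.
have := t_dvd hp ho ht nz; have := ord_dvd4 hp ho ht x.
have := order_gt0 (@sa p) x.
rewrite (sa_ord1 hp ho) nz (iter_eq_dvd (sa_inj hp ho)).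
set L := order _ x => L0 hd /dvdnP [q hq].
rewrite hq in L0 hd *.
rewrite !(mulnC _ t) in L0 hd *.
rewrite dvdn_pmul2l // in hd; rewrite dvdn_pmul2l // eqn_pmul2l //.
rewrite muln_gt0 t0 /= in L0.
have : (q <= 4)%N by apply: dvdn_leq.
clear hq; case: q L0 hd => [|[|[|[|[|q]]]]] //= _ _ _; split => //; rewrite ?muln1; auto.
Qed.
Unset Implicit Arguments.

Theorem proposition7p6 (p t : nat) (hp : prime p) (hodd : odd p)
  (ht : is_mult_order (-4 : 'F_p) t) :
  let k := (4 * t)%N in
  (secondary_cycles p k = set0 ->
     (#|primary_cycles p k| * k = p ^ 2 - 1)%N) /\
  (secondary_cycles p k != set0 ->
     exists s : nat, (s = t \/ s = (2 * t)%N) /\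
       (forall C, C \in secondary_cycles p k -> #|C| = s) /\
       (#|secondary_cycles p k| * s = p - 1)%N /\
       (#|primary_cycles p k| * k = p ^ 2 - p)%N).
Proof.
move=> k.
have finj := sa_inj hp hodd.
have t0 : (0 < t)%N by case: ht.
have dc C : dcycleb (@subadd_arc p) C = [exists x, C == forb (@sa p) x].
  exact: (dcycleP finj C).
have prim : primary_cycles p k =
    [set C | [exists x, C == forb (@sa p) x] && (#|C| == k)].
  by apply/setP => C; rewrite !inE dc.
have sec : secondary_cycles p k =
    [set C | [exists x, C == forb (@sa p) x] && ((#|C| != k) && (#|C| != 1%N))].
  by apply/setP => C; rewrite !inE dc.
have cardT : #|[set: 'F_p * 'F_p]| = (p * p)%N by rewrite cardsT card_prod card_Fp.
have zk : order (@sa p) (0, 0) != k.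
  by move/eqP: (sa_ord1 hp hodd (0,0)); rewrite eqxx => ->; rewrite /k; apply/eqP => h; lia.
split.
  move=> hsec.
  rewrite prim -(count_fam finj (Q := fun C => #|C| == k)); last by move=> x /eqP.
  have -> : [set x | #|forb (@sa p) x| == k] = [set~ (0, 0)].
    apply/setP => x; rewrite !inE card_orb.
    have [->|nz] := eqVneq x (0, 0); first by rewrite (negbTE zk).
    have := ord_cases hp hodd ht nz; case => _ _ n1.
    apply/negbNE/negP => nk.
    have : forb (@sa p) x \in secondary_cycles p k.
      rewrite sec inE card_orb nk n1 !andbT; apply/existsP; exists x; done.
    by rewrite hsec inE.
  rewrite cardsC1 card_prod card_Fp //; lia.
move=> /set0Pn [C0 hC0]; move: hC0; rewrite {1}sec inE => /andP [/existsP [x0 /eqP ->]].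
rewrite card_orb => /andP [nk0 n10].
have nz0 : x0 != (0, 0) by rewrite -(sa_ord1 hp hodd).
have [e0 c0 _] := ord_cases hp hodd ht nz0.
have S0 : iter (2 * t) (@sa p) x0 == x0 by rewrite -e0.
have od : odd t.
  by apply/negPn/negP => ev; apply: (even_t_contra ht ev nz0 (eqP S0)).
set c : 'F_p := (-4) ^+ t./2 * 2%:R.
have hS x : (iter (2 * t) (@sa p) x == x) = (x.1 == - (c * x.2)).
  exact: (odd_t_char x ht od).
set S := [set x | (x != (0, 0)) && (iter (2 * t) (@sa p) x == x)].
have S2 x : x \in S -> x.2 != 0.
  rewrite inE hS; case: x => a b /= /andP [nz /eqP ha]; apply: contraNneq nz => hb.
  by rewrite ha hb mulr0 oppr0.
have hord x : x \in S -> order (@sa p) x = order (@sa p) x0.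
  move=> xS; have x02 : x0.2 != 0 by apply: S2; rewrite inE nz0 S0.
  have x2 := S2 _ xS.
  move: xS; rewrite inE hS => /andP [_ /eqP h1].
  move: S0; rewrite hS => /eqP h0.
  rewrite (_ : x = sc (x.2 / x0.2) x0); first by rewrite ord_sc // mulf_neq0 // invr_eq0.
  case: x h1 x2 => a b /= -> b0; rewrite /sc h0; congr pair; first by field.
  by field.
have secS x : ((order (@sa p) x != k) && (order (@sa p) x != 1%N)) = (x \in S).
  rewrite inE; have [->|nz] := eqVneq x (0, 0).
    by move/eqP: (sa_ord1 hp hodd (0,0)); rewrite eqxx => ->; rewrite andbF.
  by have [-> _ ->] := ord_cases hp hodd ht nz; rewrite andbT.
have primS x : (order (@sa p) x == k) = (x \notin (0, 0) |: S).
  rewrite !inE; have [->|nz] := eqVneq x (0, 0); first by rewrite (negbTE zk).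
  by have [<- _ _] := ord_cases hp hodd ht nz; rewrite negbK.
have cardS : #|S| = p.-1.
  have -> : S = [set (- (c * b), b) | b in [set~ (0 : 'F_p)]].
    apply/setP => x; apply/idP/imsetP => [xS|[b]].
      exists x.2; first by rewrite !inE S2.
      by move: xS; rewrite inE hS => /andP [_ /eqP <-]; case: x.
    rewrite !inE => b0 ->; rewrite hS /= eqxx andbT.
    by apply: contra b0 => /eqP [_ ->].
  rewrite card_in_imset; first by rewrite cardsC1 card_Fp.
  by move=> b b' _ _ /(f_equal snd).
exists (order (@sa p) x0); split; first exact: c0.
split.
  move=> C; rewrite sec inE => /andP [/existsP [y /eqP eC]]; subst C.
  by rewrite !card_orb secS => /hord.
split.
  rewrite sec -(count_fam finj (Q := fun C => (#|C| != k) && (#|C| != 1%N))).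
    have -> : [set x | (#|forb (@sa p) x| != k) && (#|forb (@sa p) x| != 1%N)] = S.
      by apply/setP => x; rewrite inE card_orb secS.
    by rewrite cardS subn1.
  by move=> x; rewrite card_orb secS => /hord.
rewrite prim -(count_fam finj (Q := fun C => #|C| == k)); last by move=> x /eqP.
have -> : [set x | #|forb (@sa p) x| == k] = ~: ((0, 0) |: S).
  by apply/setP => x; rewrite inE card_orb primS in_setC.
have := cardsC ((0, 0) |: S); rewrite cardsU1 cardS card_prod card_Fp //.
have -> : ((0, 0) \notin S) = true by rewrite inE eqxx.
move: (#|~: _|) => n; rewrite [nat_of_bool _]/=; have := prime_gt1 hp; lia.
Qed.
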